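(* Let $n$ be a nonnegative integer and $a,c\in\mathbb{C}$ such that all series below are defined (no lower parameter zero or a negative integer). Then \[ {}_3F_2\!\left(\left.{-n,\frac{a}{2},\frac{a+1}{2} \atop a,c}\right| 4\right) =(-1)^n\,{}_3F_2\!\left(\left.{-n,\frac{2c-a-n-1}{2},\frac{2c-a-n}{2} \atop 2c-a-n-1,c}\right| 4\right). \] Equivalently, with $Q_n(a,c)=(1+a-c)_n(c)_n\,{}_3F_2\!\left(\left.{-n,\frac{a}{2},\frac{a+1}{2} \atop a,c}\right| 4\right)$ one has $Q_n(a,c)=Q_n(2c-a-n-1,c)$, and the function $W_n(x,y)=Q_n\!\left(x,\frac{1+x+y+n}{2}\right)$ satisfies $W_n(x,y)=W_n(y,x)$.
   Context: For $a\in\mathbb{C}$, $(a)_0=1$ and $(a)_k=a(a+1)\cdots(a+k-1)$ for $k\ge1$. The hypergeometric series is ${}_rF_s\!\left(\left.{\alpha_1,\ldots,\alpha_r\atop \beta_1,\ldots,\beta_s}\right|z\right)=\sum_{k\ge0}\frac{(\alpha_1)_k\cdots(\alpha_r)_k}{k!(\beta_1)_k\cdots(\beta_s)_k}z^k$, with no lower parameter zero or a negative integer; when an upper parameter is $-n$ it is a finite sum over $0\le k\le n$. *)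

(* Defs.v *)
From HB Require Import structures.
From mathcomp Require Import all_boot all_order all_algebra.
Set Implicit Arguments. Unset Strict Implicit. Unset Printing Implicit Defensive.
Import Order.TTheory GRing.Theory Num.Theory.
Local Open Scope ring_scope.

Definition poch (C : pzRingType) (a : C) (k : nat) : C :=
  \prod_(i < k) (a + i%:R).

Definition not_nonpos_int (C : pzRingType) (x : C) : Prop :=
  forall m : nat, x <> - m%:R.

Definition F32_term (C : fieldType) (n : nat) (b1 b2 d1 d2 z : C) : C :=
  \sum_(0 <= k < n.+1)
    poch (- n%:R) k * poch b1 k * poch b2 k
    / ((k`!)%:R * poch d1 k * poch d2 k) * z ^+ k.

(* Main.v *)
Require Import Defs.
From mathcomp Require Import all_boot all_order all_algebra.
From mathcomp Require Import ring.
Import Order.TTheory GRing.Theory Num.Theory.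
Local Open Scope ring_scope.

Section Generic.
Context {R : comPzRingType}.

Definition Tg (n : nat) (a c : R) : R :=
  \sum_(k < n.+1) (-1) ^+ k * ('C(n, k))%:R * poch (a + k%:R) k
                  * poch (c + k%:R) (n - k).

Definition Sg (n : nat) (a c : R) : R :=
  (-1) ^+ n * Tg n (2 * c - a - n%:R - 1) c.

Lemma poch0 (x : R) : poch x 0 = 1.
Proof. by rewrite /poch big_ord0. Qed.

Lemma pochS (x : R) k : poch x k.+1 = poch x k * (x + k%:R).
Proof. by rewrite /poch big_ord_recr. Qed.

Lemma pochSl (x : R) k : poch x k.+1 = x * poch (x + 1) k.
Proof.
rewrite /poch big_ord_recl /= addr0; congr (_ * _).
apply: eq_bigr => i _; rewrite /bump /= add1n -natr1; ring.
Qed.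

Lemma poch_diff (x : R) m :
  poch (x + 1) m.+1 - poch x m.+1 = m.+1%:R * poch (x + 1) m.
Proof. rewrite pochS pochSl -natr1; ring. Qed.

Lemma Tg0 a c : Tg 0 a c = 1.
Proof. by rewrite /Tg big_ord1 /= !poch0 expr0 bin0 !mulr1. Qed.

Lemma rel1 n a c :
  Tg n.+1 (a + 1) c - Tg n.+1 a c = - (n.+1%:R) * Tg n (a + 2) (c + 1).
Proof.
rewrite /Tg -sumrB big_ord_recl /= !addr0 !poch0 subrr add0r mulr_sumr.
apply: eq_bigr => i _; rewrite /bump /= add1n subSS.
have e1 : a + 1 + i.+1%:R = (a + i.+1%:R) + 1 by ring.
have e2 : a + i.+1%:R + 1 = a + 2 + i%:R by rewrite -natr1; ring.
have e3 : c + i.+1%:R = c + 1 + i%:R by rewrite -natr1; ring.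
rewrite e1 e3.
have hP := poch_diff (a + i.+1%:R) i.
move/eqP: hP; rewrite subr_eq => /eqP ->; rewrite e2.
have hC : (i.+1)%:R * ('C(n.+1, i.+1))%:R = n.+1%:R * ('C(n, i))%:R :> R.
  by rewrite -!natrM -mul_bin_diag.
set P0 := poch (a + i.+1%:R) i.+1.
set P2 := poch (a + 2 + i%:R) i.
set Q := poch (c + 1 + i%:R) (n - i).
set C1 := ('C(n.+1, i.+1))%:R.
transitivity (- (-1) ^+ i * ((i.+1)%:R * C1) * P2 * Q); first by rewrite exprS; ring.
by rewrite hC; ring.
Qed.

Lemma rel2 n a c :
  Tg n.+1 a (c + 1) - Tg n.+1 a c = n.+1%:R * Tg n a (c + 1).
Proof.
rewrite /Tg -sumrB big_ord_recr /= subnn !poch0 subrr addr0 mulr_sumr.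
apply: eq_bigr => i _ /=.
have hi : (i <= n)%N by rewrite -ltnS.
rewrite subSn //.
have e1 : c + 1 + i%:R = (c + i%:R) + 1 by ring.
rewrite e1.
have hP := poch_diff (c + i%:R) (n - i).
move/eqP: hP; rewrite subr_eq => /eqP ->.
have hC : (n - i).+1%:R * ('C(n.+1, i))%:R = n.+1%:R * ('C(n, i))%:R :> R.
  by rewrite -!natrM -subSn // mul_bin_down.
set P0 := poch (c + i%:R) (n - i).+1.
set P2 := poch (c + i%:R + 1) (n - i).
set Q := poch (a + i%:R) i.
set C1 := ('C(n.+1, i))%:R.
transitivity ((-1) ^+ i * ((n - i).+1%:R * C1) * Q * P2); first by ring.
by rewrite hC; ring.
Qed.

Lemma Srel n a c :
  Sg n.+1 a (c + 1) - Sg n.+1 a c = n.+1%:R * Sg n a (c + 1).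
Proof.
rewrite /Sg.
set B := 2 * c - a - n.+1%:R - 1.
have E1 : 2 * (c + 1) - a - n.+1%:R - 1 = B + 1 + 1 by rewrite /B; ring.
have E2 : 2 * (c + 1) - a - n%:R - 1 = B + 1 + 2 by rewrite /B -natr1; ring.
have E3 : B + 1 + 1 = B + 2 by ring.
rewrite E1 E2.
have h1 := rel1 n B c.
have h2 := rel1 n (B + 1) c.
have h3 := rel2 n (B + 1 + 1) c.
move/eqP: h1; rewrite subr_eq => /eqP h1.
move/eqP: h2; rewrite subr_eq => /eqP h2.
move/eqP: h3; rewrite subr_eq => /eqP h3.
rewrite h3 h2 h1 E3 exprS; ring.
Qed.

Lemma poch_zero (x : R) m j : (j < m)%N -> x + j%:R = 0 -> poch x m = 0.
Proof.
move=> hj hx; by rewrite /poch (bigD1 (Ordinal hj)) //= hx mul0r.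
Qed.

Lemma Tg_base n a : Tg n.+1 a (- n%:R) = (-1) ^+ n.+1 * poch (a + n.+1%:R) n.+1.
Proof.
rewrite /Tg big_ord_recr /= big1 ?add0r.
  by rewrite subnn poch0 binn mulr1 mulr1.
move=> i _ /=.
have hi : (i <= n)%N by rewrite -ltnS.
rewrite (@poch_zero (- n%:R + i%:R) (n.+1 - i) (n - i)) ?mulr0 //.
  by rewrite subSn.
by rewrite natrB //; ring.
Qed.

Lemma poch_neg (y : R) m :
  poch (- y) m.+1 = (-1) ^+ m.+1 * poch (y - m%:R) m.+1.
Proof.
rewrite /poch.
have -> : \prod_(i < m.+1) (- y + i%:R) = \prod_(i < m.+1) - (y - i%:R).
  by apply: eq_bigr => i _; ring.
rewrite prodrN card_ord; congr (_ * _).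
rewrite [RHS](reindex_inj rev_ord_inj) /=.
apply: eq_bigr => i _; rewrite subSS natrB; last by rewrite -ltnS.
ring.
Qed.

Lemma Sg_base n a : Sg n.+1 a (- n%:R) = (-1) ^+ n.+1 * poch (a + n.+1%:R) n.+1.
Proof.
rewrite /Sg Tg_base.
have E : 2 * - n%:R - a - n.+1%:R - 1 + n.+1%:R = - (a + n.+1%:R + n%:R) by ring.
rewrite E poch_neg addrK signrMK.
done.
Qed.

End Generic.

Lemma Tg_morph (R S : comPzRingType) (f : {rmorphism R -> S}) n a c :
  f (Tg n a c) = Tg n (f a) (f c).
Proof.
rewrite /Tg rmorph_sum; apply: eq_bigr => k _.
rewrite !rmorphM rmorph_sign rmorph_nat /poch !rmorph_prod.
congr (_ * _ * _ * _); apply: eq_bigr => i _; by rewrite !rmorphD !rmorph_nat.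
Qed.

Lemma Sg_morph (R S : comPzRingType) (f : {rmorphism R -> S}) n a c :
  f (Sg n a c) = Sg n (f a) (f c).
Proof.
rewrite /Sg rmorphM rmorph_sign Tg_morph; congr (_ * Tg _ _ _).
by rewrite !rmorphB rmorphM rmorph1 !rmorph_nat.
Qed.



Lemma per_zero (C : numClosedFieldType) (Q : {poly C}) (x0 : C) :
  (forall x, Q.[x + 1] = Q.[x]) -> Q.[x0] = 0 -> Q = 0.
Proof.
move=> hper h0.
have roots : forall m : nat, Q.[x0 + m%:R] = 0.
  elim=> [|m IH]; first by rewrite addr0.
  by rewrite -natr1 addrA hper.
apply/eqP; apply: contraT => nz.
have := max_poly_roots nz (rs := [seq x0 + m%:R | m <- iota 0 (size Q)]).
rewrite size_map size_iota ltnn; apply.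
  by apply/allP => y /mapP [m _ ->]; rewrite /root roots.
rewrite map_inj_uniq ?iota_uniq // => m1 m2 /addrI /eqP.
by rewrite eqr_nat => /eqP.
Qed.

Lemma main_id (C : numClosedFieldType) n (a c : C) : Tg n a c = Sg n a c.
Proof.
elim: n a c => [|n IH] a c.
  by rewrite /Sg !Tg0 expr0 mul1r.
pose Q : {poly C} := Tg n.+1 a%:P 'X - Sg n.+1 a%:P 'X.
have hQ : forall x, Q.[x] = Tg n.+1 a x - Sg n.+1 a x.
  move=> x; rewrite -horner_evalE /Q rmorphB /= Tg_morph Sg_morph.
  have ev : forall p : {poly C}, horner_eval x p = p.[x] by move=> p; rewrite horner_evalE.
  change (Tg n.+1 (a%:P).[x] ('X).[x] - Sg n.+1 (a%:P).[x] ('X).[x] = Tg n.+1 a x - Sg n.+1 a x).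
  by rewrite hornerC hornerX.
have Q0 : Q = 0.
  apply: (@per_zero _ Q (- n%:R)).
    move=> x; apply/eqP; rewrite -subr_eq0 !hQ.
    have -> : Tg n.+1 a (x + 1) - Sg n.+1 a (x + 1) - (Tg n.+1 a x - Sg n.+1 a x)
      = (Tg n.+1 a (x + 1) - Tg n.+1 a x) - (Sg n.+1 a (x + 1) - Sg n.+1 a x) by ring.
    by rewrite rel2 Srel IH subrr.
  by rewrite hQ Tg_base Sg_base subrr.
by apply/eqP; rewrite -subr_eq0 -hQ Q0 horner0.
Qed.


Lemma poch_add (R : comPzRingType) (x : R) k m :
  poch x (k + m) = poch x k * poch (x + k%:R) m.
Proof.
rewrite /poch big_split_ord /=; congr (_ * _).
by apply: eq_bigr => i _; rewrite natrD addrA.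
Qed.

Lemma poch_ne0 (C : numClosedFieldType) (x : C) k :
  not_nonpos_int x -> poch x k != 0.
Proof.
move=> hx; elim: k => [|k IH]; first by rewrite poch0 oner_neq0.
rewrite pochS mulf_neq0 //; rewrite addr_eq0; apply/eqP; exact: hx.
Qed.

Lemma poch_negn (C : numClosedFieldType) n k : (k <= n)%N ->
  poch (- n%:R : C) k = (-1) ^+ k * ('C(n, k))%:R * (k`!)%:R.
Proof.
rewrite -mulrA -natrM bin_ffact.
elim: k => [|k IH] hk; first by rewrite poch0 ffactn0 expr0 mul1r.
rewrite pochS IH ?(ltnW hk) // ffactnSr natrM natrB ?(ltnW hk) // exprS; ring.
Qed.

Lemma poch_half (C : numClosedFieldType) (a : C) k :
  poch (a / 2) k * poch ((a + 1) / 2) k * 4 ^+ k = poch a (k + k).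
Proof.
elim: k => [|k IH]; first by rewrite !poch0 expr0 !mulr1.
rewrite addSn addnS !pochS -IH exprS.
have h2 : (2 : C) != 0 by rewrite pnatr_eq0.
by rewrite -!natr1 natrD; field.
Qed.

Lemma conv (C : numClosedFieldType) n (x c : C) :
  not_nonpos_int x -> not_nonpos_int c ->
  F32_term n (x / 2) ((x + 1) / 2) x c 4 = Tg n x c / poch c n.
Proof.
move=> hx hc; rewrite /F32_term big_mkord /Tg mulr_suml.
apply: eq_bigr => -[k hk] _ /=.
have hkn : (k <= n)%N by rewrite -ltnS.
have hcn : poch c n = poch c k * poch (c + k%:R) (n - k) by rewrite -poch_add subnKC.
have h2 := @poch_half _ x k; rewrite poch_add in h2.
have nz1 := @poch_ne0 _ x k hx.
have nz2 := @poch_ne0 _ c k hc.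
have nz3 : poch (c + k%:R) (n - k) != 0.
  by have := @poch_ne0 _ c n hc; rewrite hcn mulf_eq0 negb_or => /andP [].
have nz4 : (k`!)%:R != 0 :> C by rewrite pnatr_eq0 -lt0n fact_gt0.
rewrite poch_negn // hcn.
set u := poch (x / 2) k in h2 *.
set v := poch ((x + 1) / 2) k in h2 *.
transitivity ((-1) ^+ k * ('C(n, k))%:R * (k`!)%:R * (u * v * 4 ^+ k)
    / ((k`!)%:R * poch x k * poch c k)).
  by field; rewrite ?nz1 ?nz2 ?nz3 ?nz4.
by rewrite h2; field; rewrite ?nz1 ?nz2 ?nz3 ?nz4.
Qed.

Theorem mainTheorem8 (C : numClosedFieldType) (n : nat) (a c : C)
  (ha : not_nonpos_int a) (hc : not_nonpos_int c)
  (hb : not_nonpos_int (2 * c - a - n%:R - 1)) :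
  F32_term n (a / 2) ((a + 1) / 2) a c 4 =
  (-1) ^+ n * F32_term n ((2 * c - a - n%:R - 1) / 2) ((2 * c - a - n%:R) / 2)
                        (2 * c - a - n%:R - 1) c 4.
Proof.
set b := 2 * c - a - n%:R - 1.
have -> : (2 * c - a - n%:R) = b + 1 by rewrite /b subrK.
by rewrite !conv // main_id /Sg mulrA.
Qed.
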